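(* For every level $t \in \mathcal{L}$ there exist $u_1, \ldots, u_n \in \mathcal{L}_s$ (with $n \ge 0$) such that $t =_{\mathcal{L}} \max(u_1, \ldots, u_n)$.
   Context: $\operatorname{imax}\colon \mathbb{N}\times\mathbb{N}\to\mathbb{N}$ is defined by $\operatorname{imax}(i,0)=0$ and $\operatorname{imax}(i,j+1)=\max(i,j+1)$. Levels are terms of the grammar $t ::= x \mid 0 \mid s(t) \mid \max(t,t) \mid \operatorname{imax}(t,t)$, with $x$ in a countable set of variables $\mathcal{X}$; $\mathcal{L}$ is the set of levels. A valuation is $\sigma\colon\mathcal{X}\to\mathbb{N}$; values are $[0]_\sigma=0$, $[x]_\sigma=\sigma(x)$, $[s(t)]_\sigma=[t]_\sigma+1$, $[\max(t_1,t_2)]_\sigma=\max([t_1]_\sigma,[t_2]_\sigma)$, $[\operatorname{imax}(t_1,t_2)]_\sigma=\operatorname{imax}([t_1]_\sigma,[t_2]_\sigma)$. Sublevels: for finite $E\subseteq\mathcal{X}$, $x\in\mathcal{X}$, $S\in\mathbb{N}$, $[A(E,x,S)]_\sigma$ is $0$ if some $y\in E$ has $\sigma(y)=0$ and $\sigma(x)+S$ otherwise; $[B(E,S)]_\sigma$ is $0$ if some $y\in E$ has $\sigma(y)=0$ and $S$ otherwise. $\mathcal{L}_s$ is the set of sublevels $A(E,x,S)$ with $x \in E$ and $B(E,S)$ with $S > 0$. $\max$ of a finite list is evaluated pointwise, with $\max()$ (empty) having value $0$. $t_1 =_{\mathcal{L}} t_2$ means $[t_1]_\sigma=[t_2]_\sigma$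 for all valuations $\sigma$. *)

(* Defs.v *)
From Stdlib Require Import Arith List.
Import ListNotations.

Definition var := nat.

Definition imax (i j : nat) : nat :=
  match j with 0 => 0 | S _ => Nat.max i j end.

Inductive level : Type :=
| LVar : var -> level
| LZero : level
| LSucc : level -> level
| LMax : level -> level -> level
| LIMax : level -> level -> level.

Definition valuation := var -> nat.

Fixpoint eval (s : valuation) (t : level) : nat :=
  match t with
  | LVar x => s x
  | LZero => 0
  | LSucc t => S (eval s t)
  | LMax a b => Nat.max (eval s a) (eval s b)
  | LIMax a b => imax (eval s a) (eval s b)
  end.

(* Sublevels A(E,x,S) and B(E,S); a finite set E of variables is given as a list. *)
Inductive sublevel : Type :=
| SubA : list var -> var -> nat -> sublevel
| SubB : list var -> nat -> sublevel.

Definition some_zero (s : valuation) (E : list var) : Prop :=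
  exists y, In y E /\ s y = 0.

Definition some_zerob (s : valuation) (E : list var) : bool :=
  existsb (fun y => Nat.eqb (s y) 0) E.

Definition eval_sub (s : valuation) (u : sublevel) : nat :=
  match u with
  | SubA E x k => if some_zerob s E then 0 else s x + k
  | SubB E k => if some_zerob s E then 0 else k
  end.

Definition in_Ls (u : sublevel) : Prop :=
  match u with
  | SubA E x _ => In x E
  | SubB _ k => 0 < k
  end.

Definition eval_max_sub (s : valuation) (us : list sublevel) : nat :=
  fold_right (fun u acc => Nat.max (eval_sub s u) acc) 0 us.

(* Main.v *)
Require Import Defs.
From Stdlib Require Import List Arith Lia.
Import ListNotations.

Definition guardof (u : sublevel) : list var :=
  match u with SubA E _ _ => E | SubB E _ => E end.
Definition addguard (F : list var) (u : sublevel) : sublevel :=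
  match u with SubA E x k => SubA (F ++ E) x k | SubB E k => SubB (F ++ E) k end.
Definition shift (u : sublevel) : sublevel :=
  match u with SubA E x k => SubA E x (S k) | SubB E k => SubB E (S k) end.
Definition f (n : nat) := match n with 0 => 0 | S _ => S n end.

Lemma zb_app s F E : some_zerob s (F ++ E) = orb (some_zerob s F) (some_zerob s E).
Proof. unfold some_zerob. apply existsb_app. Qed.

Lemma zb_false_in s E x : some_zerob s E = false -> In x E -> s x <> 0.
Proof.
  unfold some_zerob. intros H Hin Hx.
  assert (existsb (fun y => Nat.eqb (s y) 0) E = true).
  { apply existsb_exists. exists x. split; auto. apply Nat.eqb_eq; auto. }
  congruence.
Qed.

Lemma eval_sub_cases s u : in_Ls u ->
  (some_zerob s (guardof u) = true /\ eval_sub s u = 0) \/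
  (some_zerob s (guardof u) = false /\ eval_sub s u > 0).
Proof.
  destruct u as [E x k | E k]; simpl; intros H;
  destruct (some_zerob s E) eqn:Z; try (left; split; reflexivity).
  right; split; auto. pose proof (zb_false_in s E x Z H). lia.
  right; split; auto.
Qed.

Lemma ems_app s l1 l2 : eval_max_sub s (l1 ++ l2) = Nat.max (eval_max_sub s l1) (eval_max_sub s l2).
Proof. induction l1; simpl; auto. rewrite IHl1. lia. Qed.

Lemma eval_addguard s F u : eval_sub s (addguard F u) = if some_zerob s F then 0 else eval_sub s u.
Proof. destruct u; simpl; rewrite zb_app; destruct (some_zerob s F); auto. Qed.

Lemma ems_addguard s F l : eval_max_sub s (map (addguard F) l) = if some_zerob s F then 0 else eval_max_sub s l.
Proof.
  induction l; simpl. destruct (some_zerob s F); auto.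
  rewrite IHl, eval_addguard. destruct (some_zerob s F); auto.
Qed.

Lemma ems_pairs s us vs : (forall v, In v vs -> in_Ls v) ->
  eval_max_sub s (flat_map (fun v => map (addguard (guardof v)) us) vs)
  = if Nat.eqb (eval_max_sub s vs) 0 then 0 else eval_max_sub s us.
Proof.
  induction vs as [|v vs IH]; simpl; intros H; auto.
  rewrite ems_app, ems_addguard, IH by auto.
  destruct (eval_sub_cases s v (H v (or_introl eq_refl))) as [[A B]|[A B]];
  rewrite A.
  - rewrite B. simpl. destruct (Nat.eqb (eval_max_sub s vs) 0); lia.
  - destruct (Nat.eqb (Nat.max (eval_sub s v) (eval_max_sub s vs)) 0) eqn:E.
    apply Nat.eqb_eq in E; lia.
    destruct (Nat.eqb (eval_max_sub s vs) 0); lia.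
Qed.

Lemma f_max a b : f (Nat.max a b) = Nat.max (f a) (f b).
Proof. destruct a, b; simpl; lia. Qed.

Lemma ems_shift s us : (forall u, In u us -> in_Ls u) ->
  eval_max_sub s (map shift us) = f (eval_max_sub s us).
Proof.
  induction us as [|u us IH]; simpl; intros H; auto.
  rewrite IH by auto. rewrite f_max. f_equal.
  destruct (eval_sub_cases s u (H u (or_introl eq_refl))) as [[A B]|[A B]];
  destruct u; simpl in *; rewrite A in *; simpl; try lia;
  match goal with |- context [f ?x] => destruct x eqn:?; simpl; lia end.
Qed.

Theorem theorem26 :
  forall t : level,
  exists us : list sublevel,
    (forall u, In u us -> in_Ls u) /\
    (forall s : valuation, eval s t = eval_max_sub s us).
Proof.
  induction t as [x| |t IH|a IHa b IHb|a IHa b IHb].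
  - exists [SubA [x] x 0]. split.
    + intros u [<-|[]]. simpl; auto.
    + intros s. simpl. unfold some_zerob. simpl.
      destruct (Nat.eqb (s x) 0) eqn:E; simpl.
      apply Nat.eqb_eq in E; lia. lia.
  - exists []. split; simpl; auto. intros _ [].
  - destruct IH as [us [H1 H2]].
    exists (SubB [] 1 :: map shift us). split.
    + intros u [<-|Hu]. simpl; lia.
      apply in_map_iff in Hu. destruct Hu as [v [<- Hv]].
      specialize (H1 v Hv). destruct v; simpl in *; auto.
    + intros s. simpl. rewrite ems_shift by auto. rewrite H2.
      destruct (eval_max_sub s us); simpl; lia.
  - destruct IHa as [us [H1 H2]], IHb as [vs [H3 H4]].
    exists (us ++ vs). split.
    + intros u Hu. apply in_app_or in Hu. destruct Hu; auto.
    + intros s. simpl. rewrite ems_app, H2, H4. auto.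
  - destruct IHa as [us [H1 H2]], IHb as [vs [H3 H4]].
    exists (vs ++ flat_map (fun v => map (addguard (guardof v)) us) vs). split.
    + intros u Hu. apply in_app_or in Hu. destruct Hu as [Hu|Hu]; auto.
      apply in_flat_map in Hu. destruct Hu as [v [_ Hu]].
      apply in_map_iff in Hu. destruct Hu as [w [<- Hw]].
      specialize (H1 w Hw). destruct w; simpl in *; auto.
      apply in_or_app; auto.
    + intros s. simpl. rewrite ems_app, ems_pairs by auto. rewrite H2, H4.
      unfold imax. destruct (eval_max_sub s vs) eqn:E; simpl; [lia|]. destruct (eval_max_sub s us); simpl; lia.
Qed.
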